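(* Let $p$ be an odd prime, $R=F_p+vF_p$ with $v^2=v$, let $\vartheta=1-2v$ or $\vartheta=-1+2v$, and let $\phi_\vartheta:R^n\to F_p^{2n}$ be the Gray map. Let $\alpha$ be the $\vartheta$-constacyclic shift of $R^n$, $\alpha(c_0,\dots,c_{n-1})=(\vartheta c_{n-1},c_0,\dots,c_{n-2})$, and $\beta$ the cyclic shift of $F_p^{2n}$, $\beta(a_0,\dots,a_{2n-1})=(a_{2n-1},a_0,\dots,a_{2n-2})$. Then $\phi_\vartheta\alpha=\beta\phi_\vartheta$.
   Context: Write $\vartheta=\lambda+v\mu$ with $\lambda,\mu\in F_p$. The Gray map $\phi_\vartheta:R^n\to F_p^{2n}$ is defined for $c=(c_0,\dots,c_{n-1})$ with $c_i=r_i+vq_i$ ($r_i,q_i\in F_p$) by $\phi_\vartheta(c)=(\lambda(\lambda+\mu)q_0,\dots,\lambda(\lambda+\mu)q_{n-1},\,-\mu r_0-(\lambda+\mu)q_0,\dots,-\mu r_{n-1}-(\lambda+\mu)q_{n-1})$. *)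

(* Defs.v *)
From mathcomp Require Import all_boot all_algebra.
Set Implicit Arguments. Unset Strict Implicit. Unset Printing Implicit Defensive.
Import GRing.Theory.
Local Open Scope ring_scope.

(* An element r + v q is represented
   by the pair (r, q).  Addition is componentwise and multiplication is
   (r + v q)(r' + v q') = r r' + v (r q' + q r' + q q')  (using v^2 = v). *)
Definition Rp (p : nat) : Type := ('F_p * 'F_p)%type.

Definition Radd (p : nat) (a b : Rp p) : Rp p := (a.1 + b.1, a.2 + b.2).
Definition Rmul (p : nat) (a b : Rp p) : Rp p :=
  (a.1 * b.1, a.1 * b.2 + a.2 * b.1 + a.2 * b.2).

Definition const_shift (p n : nat) (theta : Rp p) (c : 'rV[Rp p]_n) : 'rV[Rp p]_n :=
  \row_(j < n) (if val j == 0%N then Rmul theta (c 0 (ord_pred j))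
                else c 0 (ord_pred j)).

Definition cyc_shift (p m : nat) (a : 'rV['F_p]_m) : 'rV['F_p]_m :=
  \row_(j < m) a 0 (ord_pred j).

Definition gray (p n : nat) (theta : Rp p) (c : 'rV[Rp p]_n) : 'rV['F_p]_(n + n) :=
  let lam := theta.1 in let mu := theta.2 in
  \row_(k < n + n)
    match split k with
    | inl i => lam * (lam + mu) * (c 0 i).2
    | inr i => - mu * (c 0 i).1 - (lam + mu) * (c 0 i).2
    end.

(* Main.v *)
Require Import Defs.
From mathcomp Require Import all_boot all_algebra.
From mathcomp Require Import zify ring.
Local Open Scope ring_scope.
Import GRing.Theory.

Lemma ord_pred_val m (i : 'I_m) :
  val (ord_pred i) = (if val i == 0%N then m.-1 else (val i).-1)%N.
Proof.
rewrite /ord_pred /=; have := ltn_ord i.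
case: eqP => [->|/eqP Hi] Hm.
  by rewrite add0n modn_small // prednK ?ltn_pred // (leq_ltn_trans _ Hm).
rewrite -subn1 addnC -addnBA; last by rewrite lt0n.
by rewrite modnDl modn_small ?subn1 //; lia.
Qed.

Theorem lemma3p12 (p : nat) (hp : prime p) (hodd : odd p) (n : nat)
  (theta : Rp p)
  (htheta : theta = (1, -2) \/ theta = (-1, 2))
  (c : 'rV[Rp p]_n) :
  gray theta (const_shift theta c) = cyc_shift (gray theta c).
Proof.
apply/rowP => k; rewrite !mxE.
case: splitP => i Hi; case: splitP => j Hj; rewrite !mxE;
  have Hi' := @ord_pred_val n i;
  case: eqP Hi' => Hi0 Hi';
  have Hk := @ord_pred_val (n+n) k; rewrite Hk in Hj; case: eqP Hj => Hk0 Hj.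
all: first [ exfalso; move: Hj Hk0 Hi' Hi Hi0 (ltn_ord i) (ltn_ord j) => /=; lia
           | have -> : ord_pred i = j by (apply: val_inj; move: Hj Hk0 Hi' Hi Hi0 (ltn_ord i) (ltn_ord j) => /=; lia) ].
all: try done.
all: case: htheta => ->; rewrite /Rmul /=; ring.
Qed.
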